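(* Let $\mathfrak n=\mathfrak v\oplus\mathfrak z$ be a Lie algebra of Heisenberg type and let $\mathcal L\subset\mathfrak v$ be a Lagrangian subspace. Then $\mathcal L^\perp$ (orthogonal complement in $\mathfrak v$) is also Lagrangian, $\mathfrak v=\mathcal L\oplus\mathcal L^\perp$, and $J_z(\mathcal L)=\mathcal L^\perp$ for every non-zero $z\in\mathfrak z$.
   Context: Lie algebra of Heisenberg type: $\mathfrak z=\mathbb R^m$ with standard inner product $\langle\cdot,\cdot\rangle$; $\mathfrak v$ is a finite-dimensional real module over the Clifford algebra $C(m)$ (relations $z^2=-\langle z,z\rangle 1$) with an inner product $(\cdot,\cdot)$ for which each $J_z$ (action of $z$) is skew-symmetric; $\mathfrak n=\mathfrak v\oplus\mathfrak z$ has $\mathfrak z$ central and bracket on $\mathfrak v$ defined by $\langle z,[u,v]\rangle=(J_zu,v)$. A Lagrangian subspace is a subspace $\mathcal L\subset\mathfrak v$ with $[\mathcal L,\mathcal L]=0$ and $\dim\mathcal L=\tfrac12\dim\mathfrak v$. *)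

(* Defs.v *)
(* Vectors of v are row vectors 'rV[R]_n; z = R^m as 'rV[R]_m. *)
From mathcomp Require Import all_boot all_order all_algebra.
From mathcomp Require Import reals.
Set Implicit Arguments. Unset Strict Implicit. Unset Printing Implicit Defensive.
Import Order.TTheory GRing.Theory Num.Theory.
Local Open Scope ring_scope.

Section HType.
Variables (R : realType) (m n : nat).

Definition zdot (z w : 'rV[R]_m) : R := (z *m w^T) 0 0.

Definition vdot (G : 'M[R]_n) (u w : 'rV[R]_n) : R := (u *m G *m w^T) 0 0.

Definition inner_product (G : 'M[R]_n) : Prop :=
  G^T = G /\ forall u : 'rV[R]_n, u != 0 -> 0 < vdot G u u.

(* action J_z of z, determined linearly by the action J i of the basis e_i;
   J_z u is written u *m Jz J z (right action on row vectors) *)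
Definition Jz (J : 'I_m -> 'M[R]_n) (z : 'rV[R]_m) : 'M[R]_n :=
  \sum_(i < m) z 0 i *: J i.

Definition heisenberg_type (G : 'M[R]_n) (J : 'I_m -> 'M[R]_n) : Prop :=
  [/\ inner_product G,
      (forall z, Jz J z *m Jz J z = - (zdot z z)%:M) &
      (forall z u w, vdot G (u *m Jz J z) w = - vdot G u (w *m Jz J z))].

(* bracket [u,w] in z, characterized by <z,[u,w]> = (J_z u, w):
   its i-th coordinate is <e_i,[u,w]> = (J_{e_i} u, w). *)
Definition bracket (G : 'M[R]_n) (J : 'I_m -> 'M[R]_n) (u w : 'rV[R]_n)
  : 'rV[R]_m := \row_i vdot G (u *m J i) w.

(* subspaces of v are represented by row spaces of n x n matrices *)
Definition lagrangian (G : 'M[R]_n) (J : 'I_m -> 'M[R]_n) (L : 'M[R]_n) : Prop :=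
  (forall u w : 'rV[R]_n, (u <= L)%MS -> (w <= L)%MS -> bracket G J u w = 0)
  /\ (\rank L * 2 = n)%N.

Definition vperp (G : 'M[R]_n) (L : 'M[R]_n) : 'M[R]_n := kermx (G *m L^T).

End HType.

(* Main.v *)
Require Import Defs.
From mathcomp Require Import all_boot all_order all_algebra.
From mathcomp Require Import reals.
Set Implicit Arguments. Unset Strict Implicit. Unset Printing Implicit Defensive.
Import Order.TTheory GRing.Theory Num.Theory.
Local Open Scope ring_scope.

Section H.
Variables (R : realType) (m n : nat).
Implicit Types (G L M : 'M[R]_n) (u w : 'rV[R]_n).

Lemma entry_tr (C : 'rV[R]_n) (B : 'M[R]_n) j :
  (C *m B^T) 0 j = (C *m (row j B)^T) 0 0.
Proof. by rewrite !mxE; apply: eq_bigr => k _; rewrite !mxE. Qed.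

Lemma perp_sub G L u : (u <= vperp G L)%MS -> forall w, (w <= L)%MS -> vdot G u w = 0.
Proof.
move=> /sub_kermxP H w /submxP [x ->].
by rewrite /vdot trmx_mul !mulmxA -(mulmxA u) H mul0mx mxE.
Qed.

Lemma sub_perp G L u : (forall w, (w <= L)%MS -> vdot G u w = 0) -> (u <= vperp G L)%MS.
Proof.
move=> H; apply/sub_kermxP; apply/rowP => j.
by rewrite [RHS]mxE mulmxA entry_tr -(H _ (row_sub j L)).
Qed.

Lemma vdot_eq0 G u : inner_product G -> vdot G u u = 0 -> u = 0.
Proof.
case=> _ pos H; apply/eqP; apply: contraTT isT => /pos.
by rewrite H ltxx.
Qed.

Lemma G_unit G : inner_product G -> row_free G.
Proof.
move=> iG; rewrite -kermx_eq0; apply/eqP/row_matrixP => i.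
rewrite row0; apply: (vdot_eq0 iG).
have /sub_kermxP H := row_sub i (kermx G).
by rewrite /vdot H mul0mx mxE.
Qed.

Lemma rank_perp G L : inner_product G -> \rank (vperp G L) = (n - \rank L)%N.
Proof.
move=> iG; rewrite /vperp mxrank_ker -mxrank_tr trmx_mul trmxK.
case: iG => [GT pos]; rewrite GT mxrankMfree //.
by apply: G_unit.
Qed.

Lemma vdot_sumJ G (J : 'I_m -> 'M[R]_n) z u w :
  vdot G (u *m Jz J z) w = \sum_k z 0 k * vdot G (u *m J k) w.
Proof.
rewrite /vdot /Jz mulmx_sumr !mulmx_suml summxE; apply: eq_bigr => k _.
by rewrite -scalemxAr -!scalemxAl [LHS]mxE.
Qed.

Lemma zdot_pos (z : 'rV[R]_m) : z != 0 -> 0 < zdot z z.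
Proof.
move=> nz; rewrite /zdot mxE lt0r; have ge: forall i : 'I_m, true -> 0 <= z 0 i * z^T i 0.
  by move=> i _; rewrite mxE -expr2 sqr_ge0.
rewrite sumr_ge0 // andbT.
apply: contra nz => /eqP H; apply/eqP/rowP => i.
have := psumr_eq0P ge H (i:=i) isT; rewrite !mxE => /eqP.
by rewrite mulf_eq0 orbb => /eqP.
Qed.

Lemma vdotZ G a u w : vdot G (a *: u) w = a * vdot G u w.
Proof. by rewrite /vdot -!scalemxAl mxE. Qed.

End H.

Theorem proposition4p1 (R : realType) (m n : nat) (G : 'M[R]_n)
  (J : 'I_m -> 'M[R]_n) (L : 'M[R]_n) :
  heisenberg_type G J -> lagrangian G J L ->
  [/\ lagrangian G J (vperp G L),
      mxdirect (L + vperp G L) /\ (L + vperp G L == 1%:M)%MS &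
      forall z : 'rV[R]_m, z != 0 -> (L *m Jz J z == vperp G L)%MS].
Proof.
move=> [iG Jsq skew] [lagL rkL].
have rkP : \rank (vperp G L) = \rank L.
  by rewrite rank_perp // -{1}rkL muln2 -addnn addnK.
have orthL z l l' : (l <= L)%MS -> (l' <= L)%MS -> vdot G (l *m Jz J z) l' = 0.
  move=> Hl Hl'; rewrite vdot_sumJ big1 // => k _.
  have := lagL l l' Hl Hl'; move/rowP/(_ k); rewrite !mxE => ->; by rewrite mulr0.
have third : forall z : 'rV[R]_m, z != 0 -> (L *m Jz J z == vperp G L)%MS.
  move=> z nz.
  have sub: (L *m Jz J z <= vperp G L)%MS.
    apply/row_subP => i; apply: sub_perp => w Hw.
    by rewrite row_mul orthL // row_sub.
  have unitJ: row_free (Jz J z).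
    rewrite row_free_unit; suff /mulmx1_unit[] : Jz J z *m (- (zdot z z)^-1 *: Jz J z) = 1%:M by [].
    rewrite -scalemxAr Jsq scaleNr scalerN opprK.
    by rewrite scale_scalar_mx mulVf // gt_eqF // zdot_pos.
  by rewrite -(mxrank_leqif_eq sub).2 mxrankMfree // rkP.
have cap: (L :&: vperp G L)%MS = 0.
  apply/row_matrixP => i; rewrite row0; apply: (vdot_eq0 iG).
  have := row_sub i (L :&: vperp G L)%MS; rewrite sub_capmx => /andP [H1 H2].
  exact: perp_sub H2 _ H1.
have dir: mxdirect (L + vperp G L) by apply/mxdirect_addsP.
split => //; last first.
  split => //; apply/andP; split; first exact: submx1.
  by rewrite sub1mx /row_full mxrank_disjoint_sum // rkP addnn -muln2 rkL.
split; last by rewrite rkP.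
move=> u w Hu Hw; apply/rowP => k; rewrite !mxE.
pose z : 'rV[R]_m := delta_mx 0 k.
have Jk : J k = Jz J z.
  rewrite /Jz (bigD1 k) //= big1 => [|i ik]; rewrite !mxE ?eqxx /=.
    by rewrite scale1r addr0.
  by rewrite (negbTE ik) scale0r.
have nz : z != 0.
  apply/eqP => /rowP/(_ k); rewrite !mxE !eqxx /= => /eqP; by rewrite oner_eq0.
move: (third z nz) => /andP[_ sPL].
move: (submx_trans Hu sPL) (submx_trans Hw sPL) => /submxP[x ->] /submxP[y ->].
rewrite Jk !mulmxA -(mulmxA (x *m L)) Jsq mulmxN mul_mx_scalar -scaleNr vdotZ.
have := skew z (x *m L) (y *m L); rewrite orthL ?submxMl // => /eqP.
by rewrite eq_sym oppr_eq0 => /eqP ->; rewrite mulr0.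
Qed.
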